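(* Let $\beta$ be a pseudo-Anosov 3-braid with MP-ratio $\alpha$, and for $k\ge0$ let $\epsilon_k=\operatorname{sgn}(x_k)\in\{\pm1\}$. Then for every $k\ge0$: (1) if $\epsilon_k=+1$ and the 4-tuple of $\mathcal T_{k+1}$ has Type 1, then $i_{k+1}=2i_k$; (2) if $\epsilon_k=+1$ and it has Type 2, then $i_{k+1}=2i_k-1$; (3) if $\epsilon_k=-1$ and it has Type 1, then $i_{k+1}=2i_k-1$; (4) if $\epsilon_k=-1$ and it has Type 2, then $i_{k+1}=2i_k$. Consequently $\epsilon_{k+1}=-1$ in Cases (1) and (4), and $\epsilon_{k+1}=+1$ in Cases (2) and (3). In particular, a Type 1 maximal splitting $\mathcal T_k\rightharpoonup\mathcal T_{k+1}$ changes the sign of the train track and a Type 2 maximal splitting preserves it.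
   Context: Identify $B_3$ with the mapping class group of the 3-punctured disk $D_3$. A measured train track on $D_3$ is a smooth graph with trivalent switches where the three edges are tangent, each edge with positive weight, the weight on one side of each switch equalling the sum of the two on the other; weights up to scaling. Maximal splitting $\tau\rightharpoonup\tau'$ splits simultaneously along all edges of largest weight. The paper fixes measured train tracks $\mathrm M(a,b),\mathrm W(a,b)$ ($a,b>0$) on $D_3$ with six edges and four switches. For a pseudo-Anosov 3-braid $\beta$ there is a unique irrational $\alpha\in(0,1)$ (the MP-ratio) such that exactly one of $\mathrm M(1,\alpha),\mathrm M(\alpha,1),\mathrm W(\alpha,1),\mathrm W(1,\alpha)$ is invariant under $\beta$; call it $\tau_0$, let $n=\lfloor1/\alpha\rfloor$ and $\tau_0\rightharpoonup\tau_1\rightharpoonup\cdots$ the maximal splitting sequence. From $\tau_{n+4}$ on all train tracks have exactly three distinct edge weights; set $\mathcal T_k=\tau_{n+3+k}$, $k\ge1$. The 4-tuple $(x_k,y_k;z_k,w_k)\in\mathbb Z^4$ of $\mathcal T_k$ is given by: smallest weight $\tfrac12(x_k+y_k\alpha)$, second smallest $\tfrac12(z_k+w_k\alpha)$; the sign of $\mathcal T_k$ is $\operatorname{sgn}(x_k)$ (nonzero). Set $(x_0,y_0;z_0,w_0)=(1,-n;0,1)$. For $k\ge0$ the 4-tuple of $\mathcal T_{k+1}$ is either $(z_k-x_k,w_k-y_k;x_k,y_k)$ (Type 1; the splitting $\mathcal T_k\rightharpoonup\mathcal T_{k+1}$ is then called Type 1) or $(x_k,y_k;z_k-x_k,w_k-y_k)$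 (Type 2). Farey data: $\frac st\boxplus\frac{s'}{t'}=\frac{s+s'}{t+t'}$; $L_0=\{\frac01,\frac11\}$ (not reduced); $L_{k+1}=L_k\cup\{a_{k,i}\boxplus a_{k,i+1}:1\le i\le 2^k\}$ listed increasingly as $a_{k+1,1}<\cdots<a_{k+1,2^{k+1}+1}$; $I_{k,i}=\left(\frac1{n+a_{k,i+1}},\frac1{n+a_{k,i}}\right)$; $i_k$ is the unique index with $\alpha\in I_{k,i_k}$. *)

(* Defs.v *)
From Stdlib Require Import Reals ZArith List Lia Lra.
Import ListNotations.
Open Scope R_scope.

Definition irrational (a : R) : Prop :=
  forall p q : Z, q <> 0%Z -> a <> IZR p / IZR q.

Fixpoint farey_refine (l : list (nat * nat)) : list (nat * nat) :=
  match l with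
  | a :: ((b :: _) as r) => a :: (fst a + fst b, snd a + snd b)%nat :: farey_refine r
  | _ => l
  end.

(* L_k, listed increasingly: a_{k,1} < ... < a_{k,2^k+1} *)
Fixpoint farey (k : nat) : list (nat * nat) :=
  match k with
  | O => [(0, 1); (1, 1)]%nat
  | S k' => farey_refine (farey k')
  end.

(* a_{k,i} as a real number (1-based index i) *)
Definition farey_a (k i : nat) : R :=
  let p := nth (i - 1) (farey k) (0, 1)%nat in INR (fst p) / INR (snd p).

Definition in_I (n k i : nat) (alpha : R) : Prop :=
  / (INR n + farey_a k (S i)) < alpha < / (INR n + farey_a k i).

(* The 4-tuple (x_k, y_k; z_k, w_k) of T_k, with T_0 the formal initial tuple.
   Type 1 / Type 2 of the step T_k -> T_{k+1}. *)
Definition type1 (x y z w : nat -> Z) (k : nat) : Prop :=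
  x (S k) = (z k - x k)%Z /\ y (S k) = (w k - y k)%Z /\
  z (S k) = x k /\ w (S k) = y k.

Definition type2 (x y z w : nat -> Z) (k : nat) : Prop :=
  x (S k) = x k /\ y (S k) = y k /\
  z (S k) = (z k - x k)%Z /\ w (S k) = (w k - y k)%Z.

Definition weight (a b : Z) (alpha : R) : R := (IZR a + IZR b * alpha) / 2.

(* Main.v *)
Require Import Defs.
From Stdlib Require Import Reals ZArith List Lia Lra.
Import ListNotations.
Open Scope R_scope.

Definition med (a b : nat*nat) : nat * nat := (fst a + fst b, snd a + snd b)%nat.

Lemma refine_len : forall l, (1 <= length l)%nat -> length (farey_refine l) = (2 * length l - 1)%nat.
Proof.
  induction l as [|a l IH]; simpl; intros H; [lia|].
  destruct l as [|b l']; simpl; [reflexivity|].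
  simpl in IH. rewrite IH by lia. lia.
Qed.

Lemma refine_even : forall l m d, (m < length l)%nat ->
  nth (2*m) (farey_refine l) d = nth m l d.
Proof.
  induction l as [|a l IH]; intros m d H; simpl in H; [lia|].
  destruct l as [|b l'].
  - destruct m; [reflexivity| simpl in H; lia].
  - destruct m as [|m]; [reflexivity|].
    replace (2 * S m)%nat with (S (S (2*m))) by lia.
    change (farey_refine (a :: b :: l')) with (a :: med a b :: farey_refine (b :: l')).
    cbn [nth]. apply IH. simpl in *; lia.
Qed.

Lemma refine_odd : forall l m d, (S m < length l)%nat ->
  nth (S (2*m)) (farey_refine l) d = med (nth m l d) (nth (S m) l d).
Proof.
  induction l as [|a l IH]; intros m d H; simpl in H; [lia|].
  destruct l as [|b l']; [simpl in H; lia|].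
  change (farey_refine (a :: b :: l')) with (a :: med a b :: farey_refine (b :: l')).
  destruct m as [|m]; [reflexivity|].
  replace (S (2 * S m))%nat with (S (S (S (2*m)))) by lia.
  cbn [nth]. apply IH. simpl in *; lia.
Qed.

Lemma farey_len k : length (farey k) = (2^k + 1)%nat.
Proof.
  induction k; [reflexivity|].
  simpl farey. rewrite refine_len; rewrite IHk; [|lia]. simpl. lia.
Qed.

Definition d0 : nat * nat := (0, 1)%nat.

Lemma farey_nb : forall k m, (S m < length (farey k))%nat ->
  (fst (nth (S m) (farey k) d0) * snd (nth m (farey k) d0)
     = fst (nth m (farey k) d0) * snd (nth (S m) (farey k) d0) + 1
   /\ 1 <= snd (nth m (farey k) d0) /\ 1 <= snd (nth (S m) (farey k) d0))%nat.
Proof.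
  induction k as [|k IH]; intros m H.
  - simpl in H. destruct m; [simpl; lia | lia].
  - change (farey (S k)) with (farey_refine (farey k)) in *.
    pose proof (farey_len k) as HL.
    rewrite refine_len in H by lia.
    destruct (Nat.Even_or_Odd m) as [[p Hp]|[p Hp]]; subst m.
    + rewrite refine_even by lia. rewrite refine_odd by lia.
      destruct (IH p ltac:(lia)) as [E [E1 E2]].
      destruct (nth p (farey k) d0) as [u v], (nth (S p) (farey k) d0) as [u' v'].
      unfold med; simpl in *. nia.
    + replace (2 * p + 1)%nat with (S (2 * p)) by lia.
      replace (S (S (2 * p))) with (2 * S p)%nat by lia.
      rewrite refine_even by lia. rewrite refine_odd by lia.
      destruct (IH p ltac:(lia)) as [E [E1 E2]].
      destruct (nth p (farey k) d0) as [u v], (nth (S p) (farey k) d0) as [u' v'].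
      unfold med; simpl in *. nia.
Qed.

Lemma nb1 : forall k i, (1 <= i <= 2^k)%nat ->
  (fst (nth i (farey k) d0) * snd (nth (i-1) (farey k) d0)
     = fst (nth (i-1) (farey k) d0) * snd (nth i (farey k) d0) + 1
   /\ 1 <= snd (nth (i-1) (farey k) d0) /\ 1 <= snd (nth i (farey k) d0))%nat.
Proof.
  intros k i H. pose proof (farey_nb k (i-1)) as X.
  replace (S (i-1)) with i in X by lia. apply X. rewrite farey_len. lia.
Qed.

Lemma lv_L k i : (1 <= i <= 2^k)%nat ->
  nth (2*i-2) (farey (S k)) d0 = nth (i-1) (farey k) d0.
Proof.
  intros H. replace (2*i-2)%nat with (2*(i-1))%nat by lia.
  apply refine_even. rewrite farey_len; lia.
Qed.

Lemma lv_M k i : (1 <= i <= 2^k)%nat ->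
  nth (2*i-1) (farey (S k)) d0 = med (nth (i-1) (farey k) d0) (nth i (farey k) d0).
Proof.
  intros H. replace (2*i-1)%nat with (S (2*(i-1)))%nat by lia.
  change (farey (S k)) with (farey_refine (farey k)).
  rewrite refine_odd. replace (S (i-1)) with i by lia. reflexivity.
  rewrite farey_len; lia.
Qed.

Lemma lv_R k i : (1 <= i <= 2^k)%nat ->
  nth (2*i) (farey (S k)) d0 = nth i (farey k) d0.
Proof.
  intros H. apply refine_even. rewrite farey_len; lia.
Qed.

Definition Plus (x y z w : nat -> Z) (n k i : nat) : Prop :=
  x k = Z.of_nat (snd (nth (i-1) (farey k) d0)) /\
  (y k + Z.of_nat n * x k = - Z.of_nat (fst (nth (i-1) (farey k) d0)))%Z /\
  (z k - x k = - Z.of_nat (snd (nth i (farey k) d0)))%Z /\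
  ((w k + Z.of_nat n * z k) - (y k + Z.of_nat n * x k) = Z.of_nat (fst (nth i (farey k) d0)))%Z.

Definition Minus (x y z w : nat -> Z) (n k i : nat) : Prop :=
  x k = (- Z.of_nat (snd (nth i (farey k) d0)))%Z /\
  (y k + Z.of_nat n * x k = Z.of_nat (fst (nth i (farey k) d0)))%Z /\
  (z k - x k = Z.of_nat (snd (nth (i-1) (farey k) d0)))%Z /\
  ((w k + Z.of_nat n * z k) - (y k + Z.of_nat n * x k) = - Z.of_nat (fst (nth (i-1) (farey k) d0)))%Z.

Ltac stepsolve k i H T :=
  unfold Plus, Minus in *;
  destruct T as [T1 [T2 [T3 T4]]]; rewrite ?T1, ?T2, ?T3, ?T4;
  destruct (nth (i-1) (farey k) d0) as [u v], (nth i (farey k) d0) as [u' v'];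
  unfold med; simpl in *; lia.

Lemma st_P1 x y z w n k i : (1 <= i <= 2^k)%nat -> Plus x y z w n k i -> type1 x y z w k ->
  Minus x y z w n (S k) (2*i).
Proof.
  intros Hi H T. unfold Minus.
  replace (2*i-1)%nat with (2*i-1)%nat by lia.
  rewrite lv_M, lv_R by lia. stepsolve k i H T.
Qed.

Lemma st_P2 x y z w n k i : (1 <= i <= 2^k)%nat -> Plus x y z w n k i -> type2 x y z w k ->
  Plus x y z w n (S k) (2*i-1).
Proof.
  intros Hi H T. unfold Plus.
  replace (2*i-1-1)%nat with (2*i-2)%nat by lia.
  rewrite lv_M, lv_L by lia. stepsolve k i H T.
Qed.

Lemma st_M1 x y z w n k i : (1 <= i <= 2^k)%nat -> Minus x y z w n k i -> type1 x y z w k ->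
  Plus x y z w n (S k) (2*i-1).
Proof.
  intros Hi H T. unfold Plus.
  replace (2*i-1-1)%nat with (2*i-2)%nat by lia.
  rewrite lv_M, lv_L by lia. stepsolve k i H T.
Qed.

Lemma st_M2 x y z w n k i : (1 <= i <= 2^k)%nat -> Minus x y z w n k i -> type2 x y z w k ->
  Minus x y z w n (S k) (2*i).
Proof.
  intros Hi H T. unfold Minus.
  rewrite lv_M, lv_R by lia. stepsolve k i H T.
Qed.

Lemma inI_of n k i alpha (u v u' v' : nat) :
  0 < alpha -> 0 < INR n ->
  nth (i-1) (farey k) d0 = (u, v) -> nth i (farey k) d0 = (u', v') ->
  (1 <= v)%nat -> (1 <= v')%nat ->
  0 < INR v * (/alpha - INR n) - INR u ->
  0 < INR u' - INR v' * (/alpha - INR n) ->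
  in_I n k i alpha.
Proof.
  intros Ha Hn EL ER Hv Hv' H1 H2.
  unfold in_I, farey_a. replace (S i - 1)%nat with i by lia.
  change (nth (i-1) (farey k) (0,1)%nat) with (nth (i-1) (farey k) d0).
  change (nth i (farey k) (0,1)%nat) with (nth i (farey k) d0).
  rewrite EL, ER. simpl fst; simpl snd.
  assert (V : 1 <= INR v) by (apply (le_INR 1); lia).
  assert (V' : 1 <= INR v') by (apply (le_INR 1); lia).
  assert (U : 0 <= INR u) by apply pos_INR.
  assert (U' : 0 <= INR u') by apply pos_INR.
  set (s := / alpha) in *.
  assert (Hs : 0 < s) by (apply Rinv_0_lt_compat; lra).
  assert (E1 : INR u / INR v - (s - INR n) = - (INR v * (s - INR n) - INR u) / INR v)
    by (field; lra).
  assert (E2 : INR u' / INR v' - (s - INR n) = (INR u' - INR v' * (s - INR n)) / INR v')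
    by (field; lra).
  assert (P1 : 0 < (INR v * (s - INR n) - INR u) / INR v) by (apply Rdiv_lt_0_compat; lra).
  assert (P2 : 0 < (INR u' - INR v' * (s - INR n)) / INR v') by (apply Rdiv_lt_0_compat; lra).
  assert (Q1 : 0 <= INR u / INR v) by (apply Rmult_le_pos; [lra| left; apply Rinv_0_lt_compat; lra]).
  assert (A : alpha = / s) by (unfold s; rewrite Rinv_inv; reflexivity).
  rewrite A. split.
  - apply Rinv_lt_contravar. apply Rmult_lt_0_compat; lra.
    rewrite Rdiv_opp_l in E1. lra.
  - apply Rinv_lt_contravar. apply Rmult_lt_0_compat; lra. 
    rewrite Rdiv_opp_l in E1. lra.
Qed.

Lemma PM_inI x y z w n k i alpha : 0 < alpha -> 0 < INR n -> (1 <= i <= 2^k)%nat ->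
  Plus x y z w n k i \/ Minus x y z w n k i ->
  0 < IZR (x k) * (/alpha - INR n) + IZR (y k + Z.of_nat n * x k) ->
  0 < IZR (z k - x k) * (/alpha - INR n) + IZR ((w k + Z.of_nat n * z k) - (y k + Z.of_nat n * x k)) ->
  in_I n k i alpha.
Proof.
  intros Ha Hn Hi HPM P1 P2.
  destruct (nb1 k i Hi) as [E [V V']].
  unfold Plus, Minus in HPM.
  destruct (nth (i-1) (farey k) d0) as [u v] eqn:EL, (nth i (farey k) d0) as [u' v'] eqn:ER.
  simpl in *.
  destruct HPM as [[H1 [H2 [H3 H4]]]|[H1 [H2 [H3 H4]]]];
    rewrite H4, H3 in P2; rewrite H2, H1 in P1; rewrite ?opp_IZR in P1; rewrite ?opp_IZR in P2;
    rewrite <- ?INR_IZR_INZ in P1; rewrite <- ?INR_IZR_INZ in P2;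
    (eapply inI_of; [exact Ha|exact Hn|exact EL|exact ER|lia|lia|lra|lra]).
Qed.

Lemma weight_eq a b alpha n : 0 < alpha ->
  weight a b alpha = alpha / 2 * (IZR a * (/alpha - INR n) + IZR (b + Z.of_nat n * a)).
Proof.
  intros Ha. unfold weight. rewrite plus_IZR, mult_IZR, <- INR_IZR_INZ. field. lra.
Qed.

Lemma weights_pos (x y z w : nat -> Z) (n k : nat) alpha : 0 < alpha ->
  0 < weight (x k) (y k) alpha < weight (z k) (w k) alpha ->
  0 < IZR (x k) * (/alpha - INR n) + IZR (y k + Z.of_nat n * x k) /\
  0 < IZR (z k - x k) * (/alpha - INR n) + IZR ((w k + Z.of_nat n * z k) - (y k + Z.of_nat n * x k)).
Proof.
  intros Ha [W1 W2]. rewrite (weight_eq _ _ _ n Ha) in W1, W2.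
  rewrite (weight_eq (z k) _ _ n Ha) in W2.
  rewrite !minus_IZR.
  set (A := IZR (x k) * (/ alpha - INR n) + IZR (y k + Z.of_nat n * x k)) in *.
  set (B := IZR (z k) * (/ alpha - INR n) + IZR (w k + Z.of_nat n * z k)) in *.
  assert (Hd : 0 < alpha / 2) by lra.
  split.
  - destruct (Rle_or_lt A 0); [|assumption]. nra.
  - assert (A < B).
    { destruct (Rle_or_lt B A); [|assumption]. nra. }
    unfold A, B in *. lra.
Qed.

Lemma mono1 k i : (1 <= i <= 2^k)%nat -> farey_a k i <= farey_a k (S i).
Proof.
  intros Hi. unfold farey_a. replace (S i - 1)%nat with i by lia.
  change (nth (i-1) (farey k) (0,1)%nat) with (nth (i-1) (farey k) d0).
  change (nth i (farey k) (0,1)%nat) with (nth i (farey k) d0).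
  destruct (nb1 k i Hi) as [E [V V']].
  destruct (nth (i-1) (farey k) d0) as [u v], (nth i (farey k) d0) as [u' v'].
  simpl in *.
  apply (f_equal INR) in E. rewrite plus_INR, !mult_INR in E. simpl in E.
  assert (V1 : 1 <= INR v) by (apply (le_INR 1); lia).
  assert (V2 : 1 <= INR v') by (apply (le_INR 1); lia).
  assert (EQ : INR u' / INR v' - INR u / INR v = (INR u' * INR v - INR u * INR v') / (INR v * INR v'))
    by (field; lra).
  assert (0 < (INR u' * INR v - INR u * INR v') / (INR v * INR v')).
  { apply Rdiv_lt_0_compat. lra. apply Rmult_lt_0_compat; lra. }
  lra.
Qed.

Lemma chain k : forall d i, (1 <= i)%nat -> (i + d <= 2^k + 1)%nat -> farey_a k i <= farey_a k (i + d).
Proof.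
  induction d as [|d IH]; intros i H1 H2.
  - rewrite Nat.add_0_r. lra.
  - rewrite Nat.add_succ_r. eapply Rle_trans. apply IH; lia. apply mono1. lia.
Qed.

Lemma inv_nonneg v : 0 <= / INR v.
Proof.
  destruct v. simpl. rewrite Rinv_0. lra.
  left. apply Rinv_0_lt_compat. apply lt_0_INR. lia.
Qed.

Lemma fa_nonneg k i : 0 <= farey_a k i.
Proof.
  unfold farey_a. apply Rmult_le_pos. apply pos_INR. apply inv_nonneg.
Qed.

Lemma uniq_lt n k i j alpha : 0 < INR n -> (1 <= i)%nat -> (i < j)%nat -> (j <= 2^k)%nat ->
  in_I n k i alpha -> in_I n k j alpha -> False.
Proof.
  intros Hn H1 H2 H3 [A _] [_ B].
  assert (C : farey_a k (S i) <= farey_a k j).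
  { pose proof (chain k (j - S i) (S i)) as X. replace (S i + (j - S i))%nat with j in X by lia. apply X; lia. }
  pose proof (fa_nonneg k (S i)).
  assert (/ (INR n + farey_a k j) <= / (INR n + farey_a k (S i))).
  { apply Rinv_le_contravar; lra. }
  lra.
Qed.

Lemma uniq n k i j alpha : 0 < INR n -> (1 <= i <= 2^k)%nat -> (1 <= j <= 2^k)%nat ->
  in_I n k i alpha -> in_I n k j alpha -> i = j.
Proof.
  intros Hn Hi Hj A B.
  destruct (lt_eq_lt_dec i j) as [[H|H]|H]; auto.
  - exfalso. eapply (uniq_lt n k i j); eauto; lia.
  - exfalso. eapply (uniq_lt n k j i); eauto; lia.
Qed.

Theorem corollary4p10
  (alpha : R) (n : nat) (x y z w : nat -> Z)
  (Halpha : 0 < alpha < 1) (Hirr : irrational alpha)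
  (Hn : INR n <= / alpha < INR n + 1)
  (H0 : x 0%nat = 1%Z /\ y 0%nat = (- Z.of_nat n)%Z /\ z 0%nat = 0%Z /\ w 0%nat = 1%Z)
  (Hstep : forall k : nat, type1 x y z w k \/ type2 x y z w k)
  (Hweights : forall k : nat, (1 <= k)%nat ->
     0 < weight (x k) (y k) alpha < weight (z k) (w k) alpha)
  (Hsign : forall k : nat, x k <> 0%Z) :
  forall k : nat,
    (forall i j : nat,
       (1 <= i <= 2 ^ k)%nat -> in_I n k i alpha ->
       (1 <= j <= 2 ^ (S k))%nat -> in_I n (S k) j alpha ->
       ((0 < x k)%Z -> type1 x y z w k -> j = (2 * i)%nat) /\
       ((0 < x k)%Z -> type2 x y z w k -> j = (2 * i - 1)%nat) /\
       ((x k < 0)%Z -> type1 x y z w k -> j = (2 * i - 1)%nat) /\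
       ((x k < 0)%Z -> type2 x y z w k -> j = (2 * i)%nat)) /\
    (type1 x y z w k -> Z.sgn (x (S k)) = (- Z.sgn (x k))%Z) /\
    (type2 x y z w k -> Z.sgn (x (S k)) = Z.sgn (x k)).
Proof.
  assert (Ha : 0 < alpha) by lra.
  assert (Hinv1 : 1 < / alpha).
  { pose proof (Rinv_r alpha ltac:(lra)). destruct (Rle_or_lt (/alpha) 1); [|lra]. nra. }
  assert (HN : 0 < INR n) by lra.
  assert (HnZ : (1 <= n)%nat).
  { destruct n; [simpl in HN; lra | lia]. }
  assert (Ht : INR n < / alpha).
  { destruct Hn as [[Hlt|Heq] _]; [exact Hlt|]. exfalso.
    apply (Hirr 1%Z (Z.of_nat n)); [lia|].
    rewrite <- INR_IZR_INZ. simpl IZR. rewrite Heq. unfold Rdiv. rewrite Rmult_1_l, Rinv_inv. reflexivity. }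
  assert (Inv : forall k, exists i, (1 <= i <= 2^k)%nat /\
             (Plus x y z w n k i \/ Minus x y z w n k i)).
  { induction k as [|k [i [Hi HPM]]].
    - exists 1%nat. split; [simpl; lia|]. left. unfold Plus. simpl. lia.
    - assert (Hp : (2 ^ S k = 2 * 2 ^ k)%nat) by (simpl; lia).
      destruct HPM as [P|M]; destruct (Hstep k) as [T|T].
      + exists (2*i)%nat. split; [lia|]. right. apply st_P1; auto.
      + exists (2*i-1)%nat. split; [lia|]. left. apply st_P2; auto.
      + exists (2*i-1)%nat. split; [lia|]. left. apply st_M1; auto.
      + exists (2*i)%nat. split; [lia|]. right. apply st_M2; auto. }
  assert (InI : forall k i, (1 <= i <= 2^k)%nat -> (Plus x y z w n k i \/ Minus x y z w n k i) ->
             in_I n k i alpha).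
  { intros k i Hi HPM. destruct k as [|k].
    - apply (PM_inI x y z w n 0 i alpha Ha HN Hi HPM).
      + destruct H0 as [E1 [E2 [E3 E4]]].
        assert (y 0%nat + Z.of_nat n * x 0%nat = 0)%Z as -> by lia.
        rewrite E1. simpl. lra.
      + destruct H0 as [E1 [E2 [E3 E4]]].
        assert ((w 0%nat + Z.of_nat n * z 0%nat) - (y 0%nat + Z.of_nat n * x 0%nat) = 1)%Z as -> by lia.
        assert (z 0%nat - x 0%nat = -1)%Z as -> by lia. simpl. lra.
    - destruct (weights_pos x y z w n (S k) alpha Ha (Hweights (S k) ltac:(lia))) as [P1 P2].
      apply (PM_inI x y z w n (S k) i alpha Ha HN Hi HPM P1 P2). }
  assert (Xpos : forall k i, Plus x y z w n k i -> (1 <= i <= 2^k)%nat -> (0 < x k)%Z).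
  { intros k i [E _] Hi. destruct (nb1 k i Hi) as [_ [V _]]. lia. }
  assert (Xneg : forall k i, Minus x y z w n k i -> (1 <= i <= 2^k)%nat -> (x k < 0)%Z).
  { intros k i [E _] Hi. destruct (nb1 k i Hi) as [_ [_ V]]. lia. }
  intros k. destruct (Inv k) as [i0 [Hi0 HPM]].
  assert (Hp : (2 ^ S k = 2 * 2 ^ k)%nat) by (simpl; lia).
  split; [|split].
  - intros i j Hi HI Hj HJ.
    assert (i = i0) by (apply (uniq n k i i0 alpha); auto). subst i0.
    split; [|split; [|split]]; intros Hx T.
    + destruct HPM as [P|M]; [|pose proof (Xneg _ _ M Hi); lia].
      pose proof (st_P1 x y z w n k i Hi P T) as M'.
      apply (uniq n (S k) j (2*i) alpha); auto; [lia|]. apply InI; auto; lia.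
    + destruct HPM as [P|M]; [|pose proof (Xneg _ _ M Hi); lia].
      pose proof (st_P2 x y z w n k i Hi P T) as M'.
      apply (uniq n (S k) j (2*i-1) alpha); auto; [lia|]. apply InI; auto; lia.
    + destruct HPM as [P|M]; [pose proof (Xpos _ _ P Hi); lia|].
      pose proof (st_M1 x y z w n k i Hi M T) as M'.
      apply (uniq n (S k) j (2*i-1) alpha); auto; [lia|]. apply InI; auto; lia.
    + destruct HPM as [P|M]; [pose proof (Xpos _ _ P Hi); lia|].
      pose proof (st_M2 x y z w n k i Hi M T) as M'.
      apply (uniq n (S k) j (2*i) alpha); auto; [lia|]. apply InI; auto; lia.
  - intros T. destruct HPM as [P|M].
    + pose proof (Xpos _ _ P Hi0). pose proof (Xneg _ _ (st_P1 x y z w n k i0 Hi0 P T) ltac:(lia)).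
      rewrite (Z.sgn_pos (x k)), (Z.sgn_neg (x (S k))) by lia. reflexivity.
    + pose proof (Xneg _ _ M Hi0). pose proof (Xpos _ _ (st_M1 x y z w n k i0 Hi0 M T) ltac:(lia)).
      rewrite (Z.sgn_neg (x k)), (Z.sgn_pos (x (S k))) by lia. reflexivity.
  - intros T. destruct HPM as [P|M].
    + pose proof (Xpos _ _ P Hi0). pose proof (Xpos _ _ (st_P2 x y z w n k i0 Hi0 P T) ltac:(lia)).
      rewrite (Z.sgn_pos (x k)), (Z.sgn_pos (x (S k))) by lia. reflexivity.
    + pose proof (Xneg _ _ M Hi0). pose proof (Xneg _ _ (st_M2 x y z w n k i0 Hi0 M T) ltac:(lia)).
      rewrite (Z.sgn_neg (x k)), (Z.sgn_neg (x (S k))) by lia. reflexivity.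
Qed.
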